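(* For every convex pentagon $K$ we have $\Omega(K)<2\Delta(K)$. Moreover, the constant $2$ cannot be replaced by a smaller one: for every $\eta<2$ there exists a convex pentagon $K$ with $\Omega(K)>\eta\,\Delta(K)$.
   Context: For a convex pentagon $K=A_1A_2A_3A_4A_5$ (indices modulo $5$), $\Omega(K)=\sum_{k=1}^5\Delta(A_kA_{k+1}A_{k+2})$ is the sum of the areas of the five triangles formed by three consecutive vertices. $\Delta(\cdot)$ denotes area. *)

(* Defs.v *)
From mathcomp Require Import all_boot all_order all_algebra.
From mathcomp Require Import reals.
Set Implicit Arguments. Unset Strict Implicit. Unset Printing Implicit Defensive.
Import Order.TTheory GRing.Theory Num.Theory.
Local Open Scope ring_scope.

Section Pentagon.
Variable R : realType.
Definition point := (R * R)%type.

(* twice the signed area of triangle abc (orientation determinant) *)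
Definition orient (a b c : point) : R :=
  (b.1 - a.1) * (c.2 - a.2) - (b.2 - a.2) * (c.1 - a.1).

Definition tri_area (a b c : point) : R := `|orient a b c| / 2.

(* A pentagon A_1..A_5 is a map 'I_5 -> point; indices are taken modulo 5
   via the cyclic successor ordS. *)
Definition nxt (i : 'I_5) : 'I_5 := ordS i.

(* Convex pentagon (vertices in convex position, listed in cyclic order):
   for every edge A_i A_(i+1), all other vertices lie strictly on the same
   side of the line A_i A_(i+1) -- the left side for every edge
   (counterclockwise) or the right side for every edge (clockwise). *)
Definition convex_pentagon (P : 'I_5 -> point) : Prop :=
  (forall i j : 'I_5, j != i -> j != nxt i ->
     0 < orient (P i) (P (nxt i)) (P j)) \/
  (forall i j : 'I_5, j != i -> j != nxt i ->
     orient (P i) (P (nxt i)) (P j) < 0).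

Definition poly_area (P : 'I_5 -> point) : R :=
  `| \sum_(i < 5) ((P i).1 * (P (nxt i)).2 - (P (nxt i)).1 * (P i).2) | / 2.

Definition Omega (P : 'I_5 -> point) : R :=
  \sum_(i < 5) tri_area (P i) (P (nxt i)) (P (nxt (nxt i))).
End Pentagon.

(* Main.v *)
Require Import Defs.
From mathcomp Require Import all_boot all_order all_algebra.
From mathcomp Require Import reals ring lra.
Import Order.TTheory GRing.Theory Num.Theory.
Local Open Scope ring_scope.

Lemma core0 {R : realType} (A1 A2 A3 A4 A5 : point R) :
  let o := @orient R in
  0 < o A1 A2 A3 -> 0 < o A2 A3 A4 -> 0 < o A3 A4 A5 -> 0 < o A4 A5 A1 ->
  0 < o A5 A1 A2 -> 0 < o A5 A1 A3 -> 0 < o A1 A2 A4 -> 0 < o A3 A4 A1 ->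
  0 < o A2 A3 A5 -> 0 < o A4 A5 A2 ->
  let S := (A1.1 * A2.2 - A2.1 * A1.2) + ((A2.1 * A3.2 - A3.1 * A2.2) +
    ((A3.1 * A4.2 - A4.1 * A3.2) + ((A4.1 * A5.2 - A5.1 * A4.2) + ((A5.1 * A1.2 - A1.1 * A5.2) + 0)))) in
  0 < S /\
  o A1 A2 A3 + o A2 A3 A4 + o A3 A4 A5 + o A4 A5 A1 + o A5 A1 A2 < 2 * S.
Proof.
move=> o h123 h234 h345 h451 h512 h513 h124 h341 h235 h452 S.
have e1 : S = o A1 A2 A3 + o A3 A4 A1 + o A4 A5 A1 by rewrite /S /o /orient; ring.
have e2 : S = o A1 A2 A3 + o A3 A4 A5 + o A5 A1 A3 by rewrite /S /o /orient; ring.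
have e3 : S = o A1 A2 A4 + o A2 A3 A4 + o A4 A5 A1 by rewrite /S /o /orient; ring.
have e4 : o A2 A3 A5 = o A5 A1 A3 + o A1 A2 A3 - o A5 A1 A2 by rewrite /o /orient; ring.
have e5 : o A4 A5 A1 = o A5 A1 A2 - o A1 A2 A4 + o A4 A5 A2 by rewrite /o /orient; ring.
have e6 : o A5 A1 A2 * o A3 A4 A1 = o A5 A1 A3 * o A1 A2 A4 - o A1 A2 A3 * o A4 A5 A1
  by rewrite /o /orient; ring.
split; first lra.
move: e1 e2 e3 e4 e5 e6 h123 h234 h345 h451 h512 h513 h124 h341 h235 h452.
move: (o A1 A2 A3) (o A2 A3 A4) (o A3 A4 A5) (o A4 A5 A1) (o A5 A1 A2) (o A5 A1 A3)
  (o A1 A2 A4) (o A3 A4 A1) (o A2 A3 A5) (o A4 A5 A2) S.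
move=> t123 t234 t345 t451 T t135 t124 t134 t235 t245 S e1 e2 e3 e4 e5 e6 *.
have key : T < t135 + t124.
  rewrite ltNge; apply/negP => hle.
  have ha : t124 < t123 by lra.
  have hb : t135 < t451 by lra.
  have : t124 * t135 < t123 * t451.
    apply: (@lt_trans _ _ (t123 * t135)); first by rewrite ltr_pM2r.
    by rewrite ltr_pM2l //; lra.
  nra.
lra.
Qed.

Definition goalshape {R : realType} (A1 A2 A3 A4 A5 : point R) : Prop :=
  `|orient A1 A2 A3| / 2 + (`|orient A2 A3 A4| / 2 + (`|orient A3 A4 A5| / 2 +
   (`|orient A4 A5 A1| / 2 + (`|orient A5 A1 A2| / 2 + 0)))) <
  2 * (`|(A1.1 * A2.2 - A2.1 * A1.2) + ((A2.1 * A3.2 - A3.1 * A2.2) +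
    ((A3.1 * A4.2 - A4.1 * A3.2) + ((A4.1 * A5.2 - A5.1 * A4.2) + ((A5.1 * A1.2 - A1.1 * A5.2) + 0)))) | / 2).

Lemma core {R : realType} (A1 A2 A3 A4 A5 : point R) :
  let o := @orient R in
  0 < o A1 A2 A3 -> 0 < o A2 A3 A4 -> 0 < o A3 A4 A5 -> 0 < o A4 A5 A1 ->
  0 < o A5 A1 A2 -> 0 < o A5 A1 A3 -> 0 < o A1 A2 A4 -> 0 < o A3 A4 A1 ->
  0 < o A2 A3 A5 -> 0 < o A4 A5 A2 -> goalshape A1 A2 A3 A4 A5.
Proof.
move=> o h1 h2 h3 h4 h5 h6 h7 h8 h9 h10.
have [hS hO] := @core0 R A1 A2 A3 A4 A5 h1 h2 h3 h4 h5 h6 h7 h8 h9 h10.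
rewrite /goalshape (gtr0_norm h1) (gtr0_norm h2) (gtr0_norm h3) (gtr0_norm h4) (gtr0_norm h5) (gtr0_norm hS).
rewrite /o in hO *; lra.
Qed.

Definition refl {R : realType} (p : point R) : point R := (p.1, - p.2).

Lemma orient_refl {R : realType} (a b c : point R) :
  orient (refl a) (refl b) (refl c) = - orient a b c.
Proof. rewrite /orient /refl /=; ring. Qed.

Lemma goalshape_refl {R : realType} (A1 A2 A3 A4 A5 : point R) :
  goalshape (refl A1) (refl A2) (refl A3) (refl A4) (refl A5) = goalshape A1 A2 A3 A4 A5.
Proof.
rewrite /goalshape !orient_refl !normrN /=.
congr (_ < 2 * (_ / 2)); rewrite -normrN; congr (`|_|); ring.
Qed.

Lemma core_neg {R : realType} (A1 A2 A3 A4 A5 : point R) :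
  let o := @orient R in
  o A1 A2 A3 < 0 -> o A2 A3 A4 < 0 -> o A3 A4 A5 < 0 -> o A4 A5 A1 < 0 ->
  o A5 A1 A2 < 0 -> o A5 A1 A3 < 0 -> o A1 A2 A4 < 0 -> o A3 A4 A1 < 0 ->
  o A2 A3 A5 < 0 -> o A4 A5 A2 < 0 -> goalshape A1 A2 A3 A4 A5.
Proof.
move=> o h1 h2 h3 h4 h5 h6 h7 h8 h9 h10.
rewrite -goalshape_refl; apply: core; rewrite orient_refl oppr_gt0 //.
Qed.

Lemma valnxt (i : 'I_5) : val (nxt i) = ((val i).+1 %% 5)%N.
Proof. by []. Qed.

Ltac normq q := do ! (match goal with |- context [q ?n] =>
  progress (let m := eval vm_compute in n in change (q n) with (q m)) end).

Lemma part1 (R : realType) (P : 'I_5 -> point R) :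
  convex_pentagon P -> Omega P < 2 * poly_area P.
Proof.
pose q k := P (inord k).
have E : forall i : 'I_5, P i = q (val i) by move=> i; rewrite /q inord_val.
have Hq : forall (Q : R -> Prop) a b, (a < 5)%N -> (b < 5)%N -> b != a -> b != (a.+1 %% 5)%N ->
   (forall i j : 'I_5, j != i -> j != nxt i -> Q (orient (P i) (P (nxt i)) (P j))) ->
   Q (orient (q a) (q (a.+1 %% 5)%N) (q b)).
  move=> Q a b ha hb hba hb1 H.
  have := H (inord a) (inord b).
  rewrite !E valnxt /= !inordK //; apply.
    by rewrite -(inj_eq val_inj) /= !inordK.
  by rewrite -(inj_eq val_inj) valnxt /= !inordK.
move=> Hc; rewrite /Omega /poly_area !big_ord_recl !big_ord0 !E /=.
normq q.
rewrite /tri_area.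
suff: goalshape (q 0%N) (q 1%N) (q 2%N) (q 3%N) (q 4%N) by [].
case: Hc => H.
  apply: core.
  exact: (Hq (fun x => 0 < x) 0%N 2%N isT isT isT isT H).
  exact: (Hq (fun x => 0 < x) 1%N 3%N isT isT isT isT H).
  exact: (Hq (fun x => 0 < x) 2%N 4%N isT isT isT isT H).
  exact: (Hq (fun x => 0 < x) 3%N 0%N isT isT isT isT H).
  exact: (Hq (fun x => 0 < x) 4%N 1%N isT isT isT isT H).
  exact: (Hq (fun x => 0 < x) 4%N 2%N isT isT isT isT H).
  exact: (Hq (fun x => 0 < x) 0%N 3%N isT isT isT isT H).
  exact: (Hq (fun x => 0 < x) 2%N 0%N isT isT isT isT H).
  exact: (Hq (fun x => 0 < x) 1%N 4%N isT isT isT isT H).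
  exact: (Hq (fun x => 0 < x) 3%N 1%N isT isT isT isT H).
apply: core_neg.
  exact: (Hq (fun x => x < 0) 0%N 2%N isT isT isT isT H).
  exact: (Hq (fun x => x < 0) 1%N 3%N isT isT isT isT H).
  exact: (Hq (fun x => x < 0) 2%N 4%N isT isT isT isT H).
  exact: (Hq (fun x => x < 0) 3%N 0%N isT isT isT isT H).
  exact: (Hq (fun x => x < 0) 4%N 1%N isT isT isT isT H).
  exact: (Hq (fun x => x < 0) 4%N 2%N isT isT isT isT H).
  exact: (Hq (fun x => x < 0) 0%N 3%N isT isT isT isT H).
  exact: (Hq (fun x => x < 0) 2%N 0%N isT isT isT isT H).
  exact: (Hq (fun x => x < 0) 1%N 4%N isT isT isT isT H).
  exact: (Hq (fun x => x < 0) 3%N 1%N isT isT isT isT H).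
Qed.

Lemma part2 (R : realType) (eta : R) : eta < 2 ->
  exists P : 'I_5 -> point R, convex_pentagon P /\ eta * poly_area P < Omega P.
Proof.
move=> heta.
pose e := (2 - eta) / (6 - eta).
have h6 : 0 < 6 - eta by lra.
have he : e * (6 - eta) = 2 - eta by rewrite /e mulfVK // gt_eqF.
have e0 : 0 < e by rewrite /e divr_gt0 //; lra.
have e1 : e < 1 by rewrite /e ltr_pdivrMr //; lra.
pose qq (k : nat) : point R := nth (0, 0) [:: (0, 0); (1, 0); (1, e); (1 - e, 2 * e); (0, 1)] k.
exists (fun i : 'I_5 => qq i).
split.
  left.
  case=> [[|[|[|[|[|k]]]]] hi] //; case=> [[|[|[|[|[|k']]]]] hj] //= _ _; normq qq;
    rewrite /orient /=; nra.
rewrite /Omega /poly_area !big_ord_recl !big_ord0 /=.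
normq qq.
rewrite /tri_area /orient /=.
clearbody e.
rewrite !ger0_norm; nra.
Qed.

Theorem lemma3p3 (R : realType) :
  (forall P : 'I_5 -> point R, convex_pentagon P -> Omega P < 2 * poly_area P) /\
  (forall eta : R, eta < 2 ->
     exists P : 'I_5 -> point R, convex_pentagon P /\ eta * poly_area P < Omega P).
Proof. split; [exact: part1 | exact: part2]. Qed.
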